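(* Let $\dot G\in\mathcal C_1\cup\mathcal C_4\cup\mathcal C_5$ be a connected, non-complete, $5$-regular and $1$ net-regular SRSG with parameters $(n,5,a,b,c)$. If $(a,b)=(2,1)$, then $\dot G$ is isomorphic to $\dot S^1_{12}$, which has parameters $(12,5,2,1,-2)$.
   Context: A signed graph $\dot G=(G,\sigma)$ is a simple graph $G$ with $\sigma:E(G)\to\{\pm1\}$; adjacency matrix $A_{\dot G}$ has entries $\sigma(v_iv_j)$ for adjacent vertices and $0$ otherwise. Degree and connectedness refer to $G$; net-degree is $d^+(v)-d^-(v)$; $\rho$ net-regular means all net-degrees equal $\rho$. $\dot G$ on $n$ vertices is an SRSG if it is neither homogeneous complete nor edgeless and there are $r\in\mathbb N$, $a,b,c\in\mathbb Z$ with $(A^2_{\dot G})_{ii}=r$, $(A^2_{\dot G})_{ij}=a$ for positive edges, $b$ for negative edges, $c$ for distinct non-adjacent pairs; parameters $(n,r,a,b,c)$. Classes: $\mathcal C_1$: $a=-b$ and (complete, or non-complete with $c\neq0$); $\mathcal C_4$: $a\ne-b$, non-complete, $c=0$; $\mathcal C_5$: $a\neq-b$, non-complete, $c\notin\{0,\frac{a+b}{2}\}$. $\dot S^1_{12}$ has vertex set $\{(s,t):s\in\{1,2,3,4\},t\in\{1,2,3\}\}$, positive edges $(s,t)(s',t)$ for $s\ne s'$, negative edges $(s,t)(s,t')$ for $t\ne t'$, and no other edges. *)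

(* Defs.v *)
From mathcomp Require Import all_boot all_order all_algebra.
Set Implicit Arguments. Unset Strict Implicit. Unset Printing Implicit Defensive.
Import Order.TTheory GRing.Theory Num.Theory.
Local Open Scope ring_scope.

(* A signed graph on a finite vertex type V is given by its signed adjacency
   function sg : V -> V -> int, sg u v = sigma(uv) if uv is an edge, 0 otherwise. *)
Definition signed_graph (V : finType) (sg : V -> V -> int) : Prop :=
  (forall u v, sg u v = sg v u) /\ (forall v, sg v v = 0) /\
  (forall u v, sg u v = 0 \/ sg u v = 1 \/ sg u v = -1).

Definition sadj (V : finType) (sg : V -> V -> int) : rel V :=
  fun u v => sg u v != 0.

Definition sdeg (V : finType) (sg : V -> V -> int) (v : V) : nat :=
  #|[set u | sg v u != 0]|.
Definition sdeg_pos (V : finType) (sg : V -> V -> int) (v : V) : nat :=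
  #|[set u | sg v u == 1]|.
Definition sdeg_neg (V : finType) (sg : V -> V -> int) (v : V) : nat :=
  #|[set u | sg v u == -1]|.

Definition sregular (V : finType) (sg : V -> V -> int) (r : nat) : Prop :=
  forall v, sdeg sg v = r.
Definition net_regular (V : finType) (sg : V -> V -> int) (rho : int) : Prop :=
  forall v, (sdeg_pos sg v)%:Z - (sdeg_neg sg v)%:Z = rho.

Definition sconnected (V : finType) (sg : V -> V -> int) : Prop :=
  forall u v, connect (sadj sg) u v.
Definition scomplete (V : finType) (sg : V -> V -> int) : Prop :=
  forall u v, u != v -> sg u v != 0.
Definition homogeneous_complete (V : finType) (sg : V -> V -> int) : Prop :=
  scomplete sg /\ ((forall u v, u != v -> sg u v = 1) \/
                   (forall u v, u != v -> sg u v = -1)).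
Definition sedgeless (V : finType) (sg : V -> V -> int) : Prop :=
  forall u v, sg u v = 0.

Definition A2 (V : finType) (sg : V -> V -> int) (u v : V) : int :=
  \sum_(w : V) sg u w * sg w v.

Definition SRSG (V : finType) (sg : V -> V -> int)
    (n r : nat) (a b c : int) : Prop :=
  #|V| = n /\ ~ homogeneous_complete sg /\ ~ sedgeless sg /\
  (forall v, A2 sg v v = r%:Z) /\
  (forall u v, sg u v = 1 -> A2 sg u v = a) /\
  (forall u v, sg u v = -1 -> A2 sg u v = b) /\
  (forall u v, u != v -> sg u v = 0 -> A2 sg u v = c).

Definition classC1 (V : finType) (sg : V -> V -> int) (a b c : int) : Prop :=
  a = - b /\ (scomplete sg \/ (~ scomplete sg /\ c <> 0)).
Definition classC4 (V : finType) (sg : V -> V -> int) (a b c : int) : Prop :=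
  a <> - b /\ ~ scomplete sg /\ c = 0.
(* c <> (a+b)/2 is written 2c <> a+b (equivalent over the rationals) *)
Definition classC5 (V : finType) (sg : V -> V -> int) (a b c : int) : Prop :=
  a <> - b /\ ~ scomplete sg /\ c <> 0 /\ 2 * c <> a + b.

Definition sg_isomorphic (V W : finType) (sg : V -> V -> int)
    (sh : W -> W -> int) : Prop :=
  exists f : V -> W, bijective f /\ forall u v, sg u v = sh (f u) (f v).

Definition S12V : finType := ('I_4 * 'I_3)%type.
Definition S12 (x y : S12V) : int :=
  if (x.2 == y.2) && (x.1 != y.1) then 1
  else if (x.1 == y.1) && (x.2 != y.2) then -1
  else 0.

(* Main.v *)
Require Import Defs.
From mathcomp Require Import all_boot all_order all_algebra.
From mathcomp Require Import zify ring lra.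
Import Order.TTheory GRing.Theory Num.Theory.
Set Implicit Arguments. Unset Strict Implicit.

Definition cls (V : finType) (R : rel V) x := [set y | R x y].
Definition clss (V : finType) (R : rel V) := [set cls R x | x in [set: V]].

Lemma cls_eq (V : finType) (R : rel V) : (forall x, R x x) ->
  (forall x y, R x y -> R y x) -> (forall x y z, R x y -> R y z -> R x z) ->
  forall x y, (cls R x == cls R y) = R x y.
Proof.
move=> Hr Hs Ht x y; apply/eqP/idP => [E|Hxy].
  have : y \in cls R y by rewrite inE Hr.
  by rewrite -E inE.
apply/setP => z; rewrite !inE; apply/idP/idP => H.
  by apply: Ht (Hs _ _ Hxy) H.
by apply: Ht Hxy H.
Qed.

Lemma card_classes (V : finType) (R : rel V) k : (forall x, R x x) ->
  (forall x y, R x y -> R y x) -> (forall x y z, R x y -> R y z -> R x z) ->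
  (forall x, #|cls R x| = k) -> #|V| = (k * #|clss R|)%N.
Proof.
move=> Hr Hs Ht Hk.
rewrite -cardsT -sum1_card (partition_big_imset (cls R)) /=.
rewrite (eq_bigr (fun _ => k)); first by rewrite sum_nat_const mulnC.
move=> j /imsetP [x _ ->].
rewrite sum1dep_card -(Hk x); apply: eq_card => y; rewrite !inE cls_eq //.
by apply/idP/idP => /Hs.
Qed.

Definition cidx (V : finType) (R : rel V) x : nat := index (cls R x) (enum (clss R)).

Lemma cidx_lt (V : finType) (R : rel V) x : (cidx R x < #|clss R|)%N.
Proof. by rewrite /cidx cardE index_mem mem_enum; apply: imset_f. Qed.

Lemma cidx_eq (V : finType) (R : rel V) : (forall x, R x x) ->
  (forall x y, R x y -> R y x) -> (forall x y z, R x y -> R y z -> R x z) ->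
  forall x y, (cidx R x == cidx R y) = R x y.
Proof.
move=> Hr Hs Ht x y; rewrite -cls_eq //; apply/eqP/eqP => [E|E]; last by rewrite /cidx E.
have Hx : cls R x \in enum (clss R) by rewrite mem_enum; apply: imset_f.
have Hy : cls R y \in enum (clss R) by rewrite mem_enum; apply: imset_f.
by rewrite -(nth_index (cls R x) Hx) -(nth_index (cls R x) Hy) -/(cidx R x) -/(cidx R y) E.
Qed.
Local Open Scope ring_scope.

Lemma sgvals (V : finType) (sg : V -> V -> int) : signed_graph sg ->
  forall u v, [\/ sg u v = 0, sg u v = 1 | sg u v = -1].
Proof. by case=> _ [_ H] u v; case: (H u v) => [|[|]] ->; [constructor 1|constructor 2|constructor 3]. Qed.

Lemma degs (V : finType) (sg : V -> V -> int) : signed_graph sg ->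
  sregular sg 5 -> net_regular sg 1 -> forall v,
  sdeg_pos sg v = 3%N /\ sdeg_neg sg v = 2%N.
Proof.
move=> Hsg Hr Hn v.
have E : [set u | sg v u != 0] = [set u | sg v u == 1] :|: [set u | sg v u == -1].
  apply/setP => w; rewrite !inE; case: (sgvals Hsg v w) => [->|->|->]; by [].
have I : [set u | sg v u == 1] :&: [set u | sg v u == -1] = set0.
  apply/setP => w; rewrite !inE; case: (sgvals Hsg v w) => [->|->|->]; by [].
have := Hr v; rewrite /sdeg E cardsU I cards0 subn0 => H5.
have := Hn v; rewrite /sdeg_pos /sdeg_neg => H1.
move: H5 H1; set p := #|_|; set q := #|_|. lia.
Qed.

Lemma sumL (V : finType) (sg : V -> V -> int) : signed_graph sg ->
  sregular sg 5 -> net_regular sg 1 -> forall (f : int -> int) v, f 0 = 0 ->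
  \sum_w f (sg v w) = 3 * f 1 + 2 * f (-1).
Proof.
move=> Hsg Hr Hn f v f0.
have [Hp Hq] := degs Hsg Hr Hn v.
rewrite (bigID (fun w => sg v w == 1)) /= [X in _ + X](bigID (fun w => sg v w == -1)) /=.
rewrite (eq_bigr (fun _ => f 1)); last by move=> w /eqP ->.
rewrite [X in _ + (X + _)](eq_bigr (fun _ => f (-1))); last by move=> w /andP [_ /eqP ->].
rewrite [X in _ + (_ + X)]big1; last first.
  move=> w /andP [H1 H2]; case: (sgvals Hsg v w) H1 H2 => [->|->|->] //.
rewrite addr0 !sumr_const.
have -> : #|[pred w | sg v w == 1]| = 3%N by rewrite -Hp /sdeg_pos cardsE.
have -> : #|[pred w | (sg v w != 1) && (sg v w == -1)]| = 2%N.
  rewrite -Hq /sdeg_neg -cardsE; apply: eq_card => w; rewrite !inE.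
  by case: (sgvals Hsg v w) => [->|->|->].
by rewrite -[f 1 *+ 3]mulr_natl -[f (-1) *+ 2]mulr_natl.
Qed.
Arguments sumL [V sg] _ _ _ f v _.

Lemma sum_but (V : finType) (F : V -> int) u :
  \sum_w (if w == u then 0 else F w) = \sum_w F w - F u.
Proof.
rewrite (bigD1 u) //= eqxx add0r [in RHS](bigD1 u) //=.
rewrite (eq_bigr F); last by move=> w /negbTE ->.
ring.
Qed.

Lemma rowsum (V : finType) (sg : V -> V -> int) : signed_graph sg ->
  sregular sg 5 -> net_regular sg 1 -> forall u, \sum_w A2 sg u w = 1.
Proof.
move=> Hsg Hr Hn u; rewrite /A2 exchange_big /=.
rewrite (eq_bigr (fun v => sg u v * 1)); last first.
  move=> v _; rewrite -mulr_sumr; congr (_ * _).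
  by rewrite (sumL Hsg Hr Hn (fun x => x)).
by rewrite (eq_bigr (fun v => sg u v)) ?(sumL Hsg Hr Hn (fun x => x)) // => v _; rewrite mulr1.
Qed.

Definition qf (x : int) : int := if x == 1 then 2 else if x == -1 then 1 else 0.
Definition rf (V : finType) (sg : V -> V -> int) u w : int :=
  if (w != u) && (sg u w == 0) then 1 else 0.

Lemma A2pt (V : finType) (sg : V -> V -> int) n a b c : signed_graph sg ->
  SRSG sg n 5 a b c -> a = 2 -> b = 1 -> forall u w,
  A2 sg u w = (if w == u then 5 else 0) + qf (sg u w) + c * rf sg u w.
Proof.
move=> Hsg [_ [_ [_ [Hd [Ha [Hb Hc]]]]]] Ea Eb u w.
have H0 : sg u u = 0 by case: Hsg => _ [].
rewrite /rf /qf; case: eqP => [->|/eqP Hwu]; first by rewrite Hd H0 eqxx /=; ring.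
case: (sgvals Hsg u w) => E; rewrite E /=.
- by rewrite Hc // 1?eq_sym //; ring.
- by rewrite Ha // Ea; ring.
- by rewrite Hb // Eb; ring.
Qed.

Lemma cR (V : finType) (sg : V -> V -> int) n a b c : signed_graph sg ->
  SRSG sg n 5 a b c -> sregular sg 5 -> net_regular sg 1 -> a = 2 -> b = 1 ->
  forall u, c * \sum_w rf sg u w = -12.
Proof.
move=> Hsg HS Hr Hn Ea Eb u.
have := rowsum Hsg Hr Hn u.
rewrite (eq_bigr _ (fun w _ => A2pt Hsg HS Ea Eb u w)) !big_split /=.
rewrite -big_mkcond big_pred1_eq (sumL Hsg Hr Hn qf) // -mulr_sumr /qf /=.
move=> H; lra.
Qed.

Definition sf (V : finType) (sg : V -> V -> int) u w : int :=
  if w == u then 0 else if sg u w != 0 then 1 else -1.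

Lemma key (V : finType) (sg : V -> V -> int) n a b c : signed_graph sg ->
  SRSG sg n 5 a b c -> sregular sg 5 -> net_regular sg 1 -> a = 2 -> b = 1 ->
  forall u v w, w != u -> sg u v != 0 -> sg v w != 0 ->
  sg u v * sg v w = (if sg u w != 0 then 1 else -1).
Proof.
move=> Hsg HS Hr Hn Ea Eb u.
have Hsym : forall x y, sg x y = sg y x by case: Hsg.
have H0 : forall x, sg x x = 0 by case: Hsg => _ [].
pose T1 w v := if w == u then 0 else `|sg u v * sg v w|.
pose T2 w v := sf sg u w * (sg u v * sg v w).
have S2 : \sum_w \sum_v T2 w v = 20.
  rewrite (eq_bigr (fun w => sf sg u w * A2 sg u w)); last first.
    by move=> w _; rewrite /A2 mulr_sumr.
  have E : forall w, sf sg u w * A2 sg u w = qf (sg u w) - c * rf sg u w.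
    move=> w; rewrite (A2pt Hsg HS Ea Eb) /sf /rf /qf.
    case: eqP => [->|/eqP Hwu]; first by rewrite H0 /=; ring.
    by case: (sgvals Hsg u w) => ->; rewrite /= ?Hwu /=; ring.
  rewrite (eq_bigr _ (fun w _ => E w)) sumrB (sumL Hsg Hr Hn qf) // -mulr_sumr.
  rewrite (cR Hsg HS Hr Hn Ea Eb u) /qf /=; ring.
have S1 : \sum_w \sum_v T1 w v = 20.
  rewrite exchange_big /=.
  rewrite (eq_bigr (fun v => `|sg u v| * 5 - `|sg u v| * `|sg u v|)).
    by rewrite (sumL Hsg Hr Hn (fun x => `|x| * 5 - `|x| * `|x|)) //= ?normr0 ?normrN ?normr1; ring.
  move=> v _; rewrite /T1 sum_but (eq_bigr (fun w => `|sg u v| * `|sg v w|)); last first.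
    by move=> w _; rewrite normrM.
  rewrite -mulr_sumr (sumL Hsg Hr Hn (fun x => `|x|)) ?normr0 //.
  rewrite normrN normr1 (Hsym v u) normrM; ring.
have D : \sum_w \sum_v (T1 w v - T2 w v) = 0.
  rewrite (eq_bigr (fun w => \sum_v T1 w v - \sum_v T2 w v)); last by move=> w _; rewrite sumrB.
  by rewrite sumrB S1 S2 subrr.
have nn : forall w v, 0 <= T1 w v - T2 w v.
  move=> w v; rewrite /T1 /T2 /sf; case: eqP => _; first by rewrite mul0r subr0.
  by case: (sgvals Hsg u v) => ->; case: (sgvals Hsg v w) => ->; case: (sgvals Hsg u w) => ->.
have D1 : forall w, \sum_v (T1 w v - T2 w v) = 0.
  move=> w; apply: (psumr_eq0P _ D) => // w' _; exact: sumr_ge0.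
move=> v w Hwu Huv Hvw.
have := psumr_eq0P (fun v _ => nn w v) (D1 w) (i := v) isT.
rewrite /T1 /T2 /sf (negbTE Hwu).
by move: Huv Hvw; case: (sgvals Hsg u v) => ->; case: (sgvals Hsg v w) => ->; case: (sgvals Hsg u w) => ->.
Qed.
Definition A2' (u v : S12V) : int := \sum_(i < 4) \sum_(j < 3) S12 u (i,j) * S12 (i,j) v.
Lemma A2E u v : A2 S12 u v = A2' u v.
Proof. rewrite /A2 /A2'. by rewrite -(pair_big xpredT xpredT (fun i j => S12 u (i,j) * S12 (i,j) v)). Qed.
Definition chk (u v : S12V) : bool :=  (if u == v then A2' u v == 5 else
   if S12 u v == 1 then A2' u v == 2 else if S12 u v == -1 then A2' u v == 1
   else A2' u v == -2).
Lemma s12_chk u v : chk u v.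
Proof.
case: u => [[[|[|[|[|?]]]] ?] [[|[|[|?]]] ?]] //;
case: v => [[[|[|[|[|?]]]] ?] [[|[|[|?]]] ?]] //;
rewrite /chk /A2' !big_ord_recr !big_ord0 /=; vm_compute; reflexivity.
Qed.

Lemma S12uu u : S12 u u = 0.
Proof. by rewrite /S12 !eqxx. Qed.

Lemma s12_srsg : SRSG S12 12 5 2 1 (-2).
Proof.
split; first by rewrite card_prod !card_ord.
split.
  case=> HC _; have := HC (@Ordinal 4 0 isT, @Ordinal 3 0 isT) (@Ordinal 4 1 isT, @Ordinal 3 1 isT).
  by move/(_ isT).
split.
  by move=> H; have := H (@Ordinal 4 0 isT, @Ordinal 3 0 isT) (@Ordinal 4 1 isT, @Ordinal 3 0 isT).
split; first by move=> v; have := s12_chk v v; rewrite /chk eqxx A2E => /eqP.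
split.
  move=> u v E; have := s12_chk u v; rewrite /chk A2E E /=.
  case: eqP => [Euv|_ /eqP //]; by move: E; rewrite Euv S12uu.
split.
  move=> u v E; have := s12_chk u v; rewrite /chk A2E E /=.
  case: eqP => [Euv|_ /eqP //]; by move: E; rewrite Euv S12uu.
move=> u v Huv E; have := s12_chk u v; rewrite /chk A2E E (negbTE Huv) /=.
by move/eqP.
Qed.

Theorem lemma3p5 (V : finType) (sg : V -> V -> int) (n : nat) (a b c : int) :
  signed_graph sg ->
  SRSG sg n 5 a b c ->
  (classC1 sg a b c \/ classC4 sg a b c \/ classC5 sg a b c) ->
  sconnected sg ->
  ~ scomplete sg ->
  sregular sg 5 ->
  net_regular sg 1 ->
  a = 2 -> b = 1 ->
  sg_isomorphic sg S12 /\ SRSG S12 12 5 2 1 (-2).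
Proof.
move=> Hsg HS _ _ _ Hr Hn Ea Eb; split; last exact: s12_srsg.
have Hsym : forall x y, sg x y = sg y x by case: Hsg.
have H0 : forall x, sg x x = 0 by case: Hsg => _ [].
have K := key Hsg HS Hr Hn Ea Eb.
have Tp : forall x y z, sg x y = 1 -> sg y z = 1 -> x != z -> sg x z = 1.
  move=> x y z Hxy Hyz Hxz.
  have Hzy : z != y by apply/eqP => E; move: Hyz; rewrite E H0.
  have := K x y z; rewrite eq_sym Hxz Hxy Hyz /= => /(_ isT isT isT).
  case: (sgvals Hsg x z) => E; rewrite E //= => _.
  have := K y x z Hzy; rewrite Hsym Hxy Hyz E /= => /(_ isT isT).
  by rewrite mul1r.
have Tn : forall x y z, sg x y = -1 -> sg y z = -1 -> x != z -> sg x z = -1.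
  move=> x y z Hxy Hyz Hxz.
  have Hzy : z != y by apply/eqP => E; move: Hyz; rewrite E H0.
  have := K x y z; rewrite eq_sym Hxz Hxy Hyz /= => /(_ isT isT isT).
  case: (sgvals Hsg x z) => E; rewrite E //= => _.
  have := K y x z Hzy; rewrite Hsym Hxy Hyz E /= => /(_ isT isT).
  by [].
pose Rp : rel V := fun x y => (x == y) || (sg x y == 1).
pose Rn : rel V := fun x y => (x == y) || (sg x y == -1).
have Rpr : forall x, Rp x x by move=> x; rewrite /Rp eqxx.
have Rnr : forall x, Rn x x by move=> x; rewrite /Rn eqxx.
have Rps : forall x y, Rp x y -> Rp y x by move=> x y; rewrite /Rp eq_sym Hsym.
have Rns : forall x y, Rn x y -> Rn y x by move=> x y; rewrite /Rn eq_sym Hsym.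
have Rpt : forall x y z, Rp x y -> Rp y z -> Rp x z.
  move=> x y z /orP[/eqP->|Hxy] // /orP[/eqP<-|Hyz]; rewrite /Rp ?Hxy ?orbT //.
  case: (boolP (x == z)) => //= Hxz; apply/eqP; apply: (Tp x y z); [exact/eqP|exact/eqP|exact Hxz].
have Rnt : forall x y z, Rn x y -> Rn y x -> Rn y z -> Rn x z.
  move=> x y z /orP[/eqP->|Hxy] // _ /orP[/eqP<-|Hyz]; rewrite /Rn ?Hxy ?orbT //.
  case: (boolP (x == z)) => //= Hxz; apply/eqP; apply: (Tn x y z); [exact/eqP|exact/eqP|exact Hxz].
have Rnt' : forall x y z, Rn x y -> Rn y z -> Rn x z.
  move=> x y z Hxy; exact: Rnt Hxy (Rns _ _ Hxy).
have cP : forall x, #|cls Rp x| = 4%N.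
  move=> x; have [Hp _] := degs Hsg Hr Hn x.
  have -> : cls Rp x = x |: [set y | sg x y == 1].
    by apply/setP => y; rewrite !inE eq_sym.
  by rewrite cardsU1 inE H0 /= -Hp.
have cN : forall x, #|cls Rn x| = 3%N.
  move=> x; have [_ Hq] := degs Hsg Hr Hn x.
  have -> : cls Rn x = x |: [set y | sg x y == -1].
    by apply/setP => y; rewrite !inE eq_sym.
  by rewrite cardsU1 inE H0 /= -Hq.
have NP := card_classes Rpr Rps Rpt cP.
have NN := card_classes Rnr Rns Rnt' cN.
have [u0 _] : exists u : V, true.
  case: (pickP (@predT V)) => [u _|H]; first by exists u.
  case: HS => _ [_ [Hse _]]; exfalso; apply: Hse => x y; by have := H x.
have Hrf : \sum_w rf sg u0 w = (#|V|%:Z - 6).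
  have E : forall w, rf sg u0 w = 1 - (if w == u0 then 1 else 0) - (if sg u0 w != 0 then 1 else 0).
    move=> w; rewrite /rf; case: eqP => [->|_]; first by rewrite H0.
    by case: (sgvals Hsg u0 w) => ->.
  rewrite (eq_bigr _ (fun w _ => E w)) !sumrB -big_mkcond big_pred1_eq.
  rewrite (sumL Hsg Hr Hn (fun x => if x != 0 then 1 else 0)) //=.
  rewrite sumr_const (_ : #|xpredT| = #|V|); last by apply: eq_card.
  rewrite natz; ring.
have Hc := cR Hsg HS Hr Hn Ea Eb u0.
have Hge : 0 <= \sum_w rf sg u0 w by apply: sumr_ge0 => w _; rewrite /rf; case: ifP.
have N12 : #|V| = 12%N.
  move: Hc Hge NP NN; rewrite Hrf; set N := #|V|; set p := #|clss Rp|; set q := #|clss Rn|.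
  move=> Hc Hge NP NN.
  have Hc1 : c <= -1 by nia.
  have HN : (N <= 18)%N by nia.
  lia.
have cp3 : #|clss Rp| = 3%N by lia.
have cn4 : #|clss Rn| = 4%N by lia.
have Lp : forall x, (cidx Rp x < 3)%N by move=> x; rewrite -cp3 cidx_lt.
have Ln : forall x, (cidx Rn x < 4)%N by move=> x; rewrite -cn4 cidx_lt.
pose f x : S12V := ((inord (cidx Rn x) : 'I_4), (inord (cidx Rp x) : 'I_3)).
have e1 : forall x y, ((f x).1 == (f y).1) = Rn x y.
  by move=> x y; rewrite /f /= -val_eqE /= !inordK ?Ln // (cidx_eq Rnr Rns Rnt').
have e2 : forall x y, ((f x).2 == (f y).2) = Rp x y.
  by move=> x y; rewrite /f /= -val_eqE /= !inordK ?Lp // (cidx_eq Rpr Rps Rpt).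
have finj : injective f.
  move=> x y E; have := e1 x y; have := e2 x y; rewrite E !eqxx /Rn /Rp.
  case: eqP => // _ /= /esym/eqP H1 /esym/eqP H2.
  by move: H1; rewrite H2.
exists f; split.
  by apply: inj_card_bij finj _; rewrite card_prod !card_ord N12.
move=> x y; rewrite /S12 e1 e2 /Rp /Rn.
case: (boolP (x == y)) => [/eqP->|Hxy] /=; first by rewrite H0.
by case: (sgvals Hsg x y) => ->.
Qed.
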